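(* In the one-way trading setting with price elasticity, for every $\pi\ge1$, $$\Phi_\Delta(\pi)\ \le\ \bar\Phi(\pi):=\frac{2\Delta}{\pi\left(1+\sqrt{1-1/\pi}\right)}\,(\ln\theta+1),\qquad\theta=M/m.$$
   Context: Fix $\Delta>0$, $0<m\le M$, $\theta=M/m$. Let $\mathcal G_{PE}$ be the set of functions $g(v)=(p-f(v))\,v$ on $[0,\Delta]$, where $p\in[m,M]$ and $f:[0,\Delta]\to[0,\infty)$ is convex and differentiable with $f(0)=0$. An input is a finite sequence $\sigma=(g_1,\dots,g_T)$, $T\ge1$, with $g_t(v)=(p(t)-f_t(v))v\in\mathcal G_{PE}$; $\sigma^{[1:t]}=(g_1,\dots,g_t)$ ($\sigma^{[1:0]}$ empty). $\eta_{OPT}(\sigma^{[1:t]})$ is the optimal value of $\max\sum_{s=1}^t g_s(v_s)$ s.t. $\sum_{s=1}^t v_s\le\Delta$, $v_s\ge0$ (and $0$ for the empty sequence). For $\pi\ge1$, CR-Pursuit($\pi$) outputs at time $t$ the smallest $\bar v_t\in[0,\Delta]$ with $g_t(\bar v_t)=\frac1\pi\big[\eta_{OPT}(\sigma^{[1:t]})-\eta_{OPT}(\sigma^{[1:t-1]})\big]$. $\Phi_\Delta(\pi)$ is the supremum over all such inputs of $\sum_{t=1}^T\bar v_t$. *)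

(* Defs.v *)
From Stdlib Require Import Reals Lra.
Open Scope R_scope.

Fixpoint sum1 (F : nat -> R) (n : nat) : R :=
  match n with
  | O => 0
  | S k => sum1 F k + F (S k)
  end.

Definition convex_on (f : R -> R) (a b : R) : Prop :=
  forall x y l, a <= x <= b -> a <= y <= b -> 0 <= l <= 1 ->
    f (l * x + (1 - l) * y) <= l * f x + (1 - l) * f y.

(* differentiability of f on the closed interval [a,b]
   (one-sided derivatives at the endpoints) *)
Definition differentiable_on (f : R -> R) (a b : R) : Prop :=
  forall x, a <= x <= b ->
    exists l, limit1_in (fun y => (f y - f x) / (y - x))
                        (fun y => a <= y <= b /\ y <> x) l x.

Definition elasticity_fun (Delta : R) (f : R -> R) : Prop :=
  convex_on f 0 Delta /\ differentiable_on f 0 Delta /\ f 0 = 0 /\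
  (forall v, 0 <= v <= Delta -> 0 <= f v).

Definition gPE (p : R) (f : R -> R) (v : R) : R := (p - f v) * v.

(* Set of achievable objective values of the offline problem on the
   prefix sigma^[1:t] of the input (p, f) indexed by s = 1..t. *)
Definition feasible_values (Delta : R) (p : nat -> R) (f : nat -> R -> R)
  (t : nat) (r : R) : Prop :=
  exists v : nat -> R,
    (forall s, (1 <= s <= t)%nat -> 0 <= v s) /\
    sum1 v t <= Delta /\
    r = sum1 (fun s => gPE (p s) (f s) (v s)) t.

Definition is_eta_opt (Delta : R) (p : nat -> R) (f : nat -> R -> R)
  (t : nat) (eta : R) : Prop :=
  is_lub (feasible_values Delta p f t) eta.

Definition cr_pursuit_output (Delta : R) (p : R) (f : R -> R)
  (target : R) (x : R) : Prop :=
  0 <= x <= Delta /\ gPE p f x = target /\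
  (forall w, 0 <= w <= Delta -> gPE p f w = target -> x <= w).

(* Main.v *)
Require Import Defs.
From Stdlib Require Import Reals Lra Lia List Classical.
Open Scope R_scope.

Lemma sum1_ext F G n : (forall s, (1 <= s <= n)%nat -> F s = G s) -> sum1 F n = sum1 G n.
Proof. induction n; simpl; intros H; auto. rewrite IHn; [|intros; apply H; lia]. rewrite H; auto; lia. Qed.

Lemma sum1_plus F G n : sum1 (fun s => F s + G s) n = sum1 F n + sum1 G n.
Proof. induction n; simpl; [lra|]. rewrite IHn; lra. Qed.

Lemma sum1_minus F G n : sum1 (fun s => F s - G s) n = sum1 F n - sum1 G n.
Proof. induction n; simpl; [lra|]. rewrite IHn; lra. Qed.

Lemma sum1_scal c F n : sum1 (fun s => c * F s) n = c * sum1 F n.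
Proof. induction n; simpl; [lra|]. rewrite IHn; lra. Qed.

Lemma sum1_le F G n : (forall s, (1 <= s <= n)%nat -> F s <= G s) -> sum1 F n <= sum1 G n.
Proof. induction n; simpl; intros H; [lra|]. assert (sum1 F n <= sum1 G n) by (apply IHn; intros; apply H; lia).
 assert (F (S n) <= G (S n)) by (apply H; lia). lra. Qed.

Lemma sum1_nonneg F n : (forall s, (1 <= s <= n)%nat -> 0 <= F s) -> 0 <= sum1 F n.
Proof. intros H. replace 0 with (sum1 (fun _ => 0) n). apply sum1_le; auto.
 induction n; simpl; auto. rewrite IHn; [lra|]. intros; apply H; lia. Qed.

Lemma sum1_mono_n F k n : (forall s, (1 <= s <= n)%nat -> 0 <= F s) -> (k <= n)%nat -> sum1 F k <= sum1 F n.
Proof. intros H Hk. induction n. assert (k=0)%nat by lia; subst; simpl; lra.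
 destruct (Nat.eq_dec k (S n)). subst; lra. simpl.
 assert (sum1 F k <= sum1 F n) by (apply IHn; [intros; apply H; lia|lia]).
 assert (0 <= F (S n)) by (apply H; lia). lra. Qed.

Lemma sum1_term_le F n s : (forall s, (1 <= s <= n)%nat -> 0 <= F s) -> (1 <= s <= n)%nat -> F s <= sum1 F n.
Proof. intros H Hs. destruct s. lia.
 assert (sum1 F (S s) <= sum1 F n) by (apply sum1_mono_n; auto; lia).
 simpl in H0. assert (0 <= sum1 F s) by (apply sum1_nonneg; intros; apply H; lia). lra. Qed.

Lemma sum1_tele a n : sum1 (fun t => a t - a (t - 1)%nat) n = a n - a 0%nat.
Proof. induction n; simpl; [lra|]. rewrite IHn. replace (n - 0)%nat with n by lia. lra. Qed.

Lemma lub_approx E l eps : is_lub E l -> 0 < eps -> exists r, E r /\ l - eps < r.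
Proof. intros [Hub Hl] He. apply NNPP; intro Hn.
 assert (is_upper_bound E (l - eps)). { intros r Hr. destruct (Rle_dec r (l - eps)); auto. exfalso; apply Hn; exists r; split; auto; lra. }
 specialize (Hl _ H). lra. Qed.
Lemma div_nonneg x w : 0 <= x -> 0 < w -> 0 <= x / w.
Proof. intros; unfold Rdiv; apply Rmult_le_pos; [lra|left; apply Rinv_0_lt_compat; lra]. Qed.
Lemma div_le1 x w : x <= w -> 0 < w -> x / w <= 1.
Proof. intros. apply (Rmult_le_reg_r w); [lra|]. unfold Rdiv; rewrite Rmult_assoc, Rinv_l; lra. Qed.

Lemma f_chord D f x w : elasticity_fun D f -> 0 <= x <= w -> w <= D -> 0 < w -> f x <= x / w * f w.
Proof. intros [Hc [_ [H0 Hnn]]] Hx Hw Hw0.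
 pose proof (Hc w 0 (x / w)) as C.
 assert (0 <= x / w <= 1). { split. apply div_nonneg; lra. apply div_le1; lra. }
 replace (x / w * w + (1 - x / w) * 0) with x in C by (field; lra).
 rewrite H0 in C. specialize (C ltac:(lra) ltac:(lra) H). lra. Qed.

Lemma f_mono D f x y : elasticity_fun D f -> 0 <= x <= y -> y <= D -> f x <= f y.
Proof. intros E Hx Hy. destruct (Req_dec y 0). subst. replace x with 0 by lra; lra.
 pose proof (f_chord D f x y E Hx Hy ltac:(lra)).
 destruct E as [_ [_ [_ Hnn]]]. assert (0 <= f y) by (apply Hnn; lra).
 assert (x / y <= 1) by (apply div_le1; lra).
 assert (0 <= (1 - x / y) * f y) by (apply Rmult_le_pos; lra). nra. Qed.

Lemma g_concave D p f x y l : elasticity_fun D f -> 0 <= x <= D -> 0 <= y <= D -> 0 <= l <= 1 ->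
  l * gPE p f x + (1 - l) * gPE p f y <= gPE p f (l * x + (1 - l) * y).
Proof. intros E Hx Hy Hl. unfold gPE.
 set (z := l * x + (1 - l) * y).
 assert (Hz : 0 <= z) by (unfold z; nra).
 assert (C : f z <= l * f x + (1 - l) * f y) by (destruct E as [Hc _]; apply Hc; auto).
 assert (M : 0 <= (x - y) * (f x - f y)).
 { destruct (Rle_dec x y). assert (f x <= f y) by (apply (f_mono D); [exact E|lra|lra]).
   replace ((x - y) * (f x - f y)) with ((y - x) * (f y - f x)) by ring. apply Rmult_le_pos; lra.
   assert (f y <= f x) by (apply (f_mono D); [exact E|lra|lra]). apply Rmult_le_pos; lra. }
 assert (z * f z <= z * (l * f x + (1 - l) * f y)) by (apply Rmult_le_compat_l; auto).
 assert (z * (l * f x + (1 - l) * f y) <= l * (x * f x) + (1 - l) * (y * f y)).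
 { unfold z. assert (0 <= l * (1 - l)) by nra. nra. }
 unfold z in *. nra. Qed.

Lemma g_exchange D p f a b lam : elasticity_fun D f -> 0 <= a <= D -> 0 <= b <= D -> 0 <= lam <= 1 ->
  gPE p f a + gPE p f b <= gPE p f (b + lam * (a - b)) + gPE p f (a - lam * (a - b)).
Proof. intros E Ha Hb Hl.
 pose proof (g_concave D p f a b lam E Ha Hb Hl).
 pose proof (g_concave D p f a b (1 - lam) E Ha Hb ltac:(lra)).
 replace (b + lam * (a - b)) with (lam * a + (1 - lam) * b) by ring.
 replace (a - lam * (a - b)) with ((1 - lam) * a + (1 - (1 - lam)) * b) by ring. lra. Qed.

Lemma g_le_p D p f v : elasticity_fun D f -> 0 <= v <= D -> gPE p f v <= p * v.
Proof. intros [_ [_ [_ H]]] Hv. unfold gPE. specialize (H v Hv). nra. Qed.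

Lemma g_0 p f : f 0 = 0 -> gPE p f 0 = 0.
Proof. intros; unfold gPE; ring. Qed.
Lemma f_cont_within D f x eps : elasticity_fun D f -> 0 <= x <= D -> 0 < eps ->
  exists del, 0 < del /\ forall y, 0 <= y <= D -> Rabs (y - x) < del -> Rabs (f y - f x) < eps.
Proof. intros [_ [Hd _]] Hx He. destruct (Hd x Hx) as [l Hl].
 destruct (Hl 1 ltac:(lra)) as [alp [Ha Hq]].
 set (K := Rabs l + 1).
 assert (HK : 0 < K) by (unfold K; pose proof (Rabs_pos l); lra).
 exists (Rmin alp (eps / K)). split. apply Rmin_glb_lt; auto. apply Rdiv_lt_0_compat; lra.
 intros y Hy Hyx. destruct (Req_dec y x). subst. rewrite Rminus_diag, Rabs_R0; lra.
 assert (Hyx1 : Rabs (y - x) < alp) by (eapply Rlt_le_trans; [exact Hyx|apply Rmin_l]).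
 assert (Hyx2 : Rabs (y - x) < eps / K) by (eapply Rlt_le_trans; [exact Hyx|apply Rmin_r]).
 specialize (Hq y (conj (conj Hy H) Hyx1)). simpl in Hq. unfold R_dist in Hq.
 assert (Hne : y - x <> 0) by lra.
 assert (Hqq : Rabs ((f y - f x) / (y - x)) <= K).
 { unfold K. pose proof (Rabs_triang_inv ((f y - f x) / (y - x)) l). lra. }
 replace (f y - f x) with ((f y - f x) / (y - x) * (y - x)) by (field; auto).
 rewrite Rabs_mult.
 assert (0 < Rabs (y - x)) by (apply Rabs_pos_lt; auto).
 apply Rle_lt_trans with (K * Rabs (y - x)). apply Rmult_le_compat_r; lra.
 replace eps with (K * (eps / K)) by (field; lra). apply Rmult_lt_compat_l; lra. Qed.

Definition clamp D v := Rmax 0 (Rmin D v).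

Lemma clamp_in D v : 0 <= D -> 0 <= clamp D v <= D.
Proof. intros. unfold clamp, Rmax, Rmin. repeat destruct Rle_dec; lra. Qed.

Lemma clamp_id D v : 0 <= v <= D -> clamp D v = v.
Proof. intros. unfold clamp, Rmax, Rmin. repeat destruct Rle_dec; lra. Qed.

Lemma clamp_lip D x y : 0 <= D -> Rabs (clamp D y - clamp D x) <= Rabs (y - x).
Proof. intros. unfold clamp, Rmax, Rmin. repeat destruct Rle_dec; unfold Rabs; repeat destruct Rcase_abs; lra. Qed.

Lemma g_cont_within D p f x eps : elasticity_fun D f -> 0 <= x <= D -> 0 < eps ->
  exists del, 0 < del /\ forall y, 0 <= y <= D -> Rabs (y - x) < del -> Rabs (gPE p f y - gPE p f x) < eps.
Proof. intros E Hx He.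
 set (A := Rabs p + Rabs (f x) + 1).
 assert (HA : 0 < A) by (unfold A; pose proof (Rabs_pos p); pose proof (Rabs_pos (f x)); lra).
 set (B := D + 1).
 assert (HB : 0 < B) by (unfold B; lra).
 destruct (f_cont_within D f x (eps / 2 / B) E Hx) as [d1 [Hd1 H1]]. apply Rdiv_lt_0_compat; lra.
 exists (Rmin d1 (eps / 2 / A)). split. apply Rmin_glb_lt; auto. apply Rdiv_lt_0_compat; lra.
 intros y Hy Hyx.
 assert (Hyx1 : Rabs (y - x) < d1) by (eapply Rlt_le_trans; [exact Hyx|apply Rmin_l]).
 assert (Hyx2 : Rabs (y - x) < eps / 2 / A) by (eapply Rlt_le_trans; [exact Hyx|apply Rmin_r]).
 specialize (H1 y Hy Hyx1).
 unfold gPE.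
 replace ((p - f y) * y - (p - f x) * x) with ((p - f x) * (y - x) - (f y - f x) * y) by ring.
 eapply Rle_lt_trans. apply Rabs_triang. rewrite Rabs_Ropp, !Rabs_mult.
 assert (Rabs (p - f x) <= A) by (unfold A; pose proof (Rabs_triang p (- f x)) as HH; rewrite Rabs_Ropp in HH; unfold Rminus; lra).
 assert (Rabs y <= B) by (unfold B; rewrite Rabs_pos_eq; lra).
 assert (Rabs (p - f x) * Rabs (y - x) <= A * (eps / 2 / A)).
 { apply Rmult_le_compat; try apply Rabs_pos; lra. }
 assert (Rabs (f y - f x) * Rabs y <= (eps / 2 / B) * B).
 { apply Rmult_le_compat; try apply Rabs_pos; lra. }
 replace (A * (eps / 2 / A)) with (eps / 2) in H2 by (field; lra).
 replace (eps / 2 / B * B) with (eps / 2) in H3 by (field; lra).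
 assert (Rabs (p - f x) * Rabs (y - x) < eps / 2 \/ Rabs (f y - f x) * Rabs y < eps / 2).
 { left. destruct (Req_dec (Rabs (y - x)) 0). rewrite H4; rewrite Rmult_0_r; lra.
   apply Rle_lt_trans with (A * Rabs (y - x)). apply Rmult_le_compat_r; [apply Rabs_pos|lra].
   replace (eps / 2) with (A * (eps / 2 / A)) by (field; lra). apply Rmult_lt_compat_l; lra. }
 destruct H4; lra. Qed.

Lemma h_cont D p f : elasticity_fun D f -> 0 <= D -> continuity (fun v => gPE p f (clamp D v)).
Proof. intros E HD a. unfold continuity_pt, continue_in, limit1_in, limit_in. intros eps He.
 destruct (g_cont_within D p f (clamp D a) eps E (clamp_in D a HD) He) as [del [Hd H]].
 exists del. split; auto. intros x [_ Hx]. simpl in *. unfold R_dist in *.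
 apply H. apply clamp_in; auto. eapply Rle_lt_trans. apply clamp_lip; auto. auto. Qed.

Lemma root_exists D p f tau x : elasticity_fun D f -> 0 < D -> 0 < tau -> 0 <= x <= D ->
  tau <= gPE p f x -> exists z, 0 <= z <= x /\ gPE p f z = tau.
Proof. intros E HD Ht Hx Hg.
 destruct (Req_dec (gPE p f x) tau). exists x; split; auto; lra.
 assert (H0 : f 0 = 0) by (destruct E as [_ [_ [H0 _]]]; auto).
 assert (x <> 0). { intro; subst. rewrite g_0 in Hg; auto. lra. }
 set (h := fun v => gPE p f (clamp D v) - tau).
 assert (Hc : continuity h). { unfold h. apply continuity_minus. apply h_cont; auto; lra. apply continuity_const; intros u v; auto. }
 assert (h 0 < 0). { unfold h. rewrite clamp_id by lra. rewrite g_0; auto. lra. }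
 assert (0 < h x). { unfold h. rewrite clamp_id by lra. lra. }
 destruct (IVT h 0 x Hc ltac:(lra) H2 H3) as [z [Hz Hhz]].
 exists z. split; auto. unfold h in Hhz. rewrite clamp_id in Hhz by lra. lra. Qed.

Lemma step_bound D p f piv d w vb : elasticity_fun D f -> 0 < D -> 0 < p -> 1 <= piv -> 0 <= d ->
  0 <= w <= D -> d <= gPE p f w -> cr_pursuit_output D p f (d / piv) vb ->
  vb <= 2 * (d / piv) / (p * (1 + sqrt (1 - 1 / piv))).
Proof. intros E HD Hp Hpi Hd Hw Hdw [Hvb [Hgv Hmin]].
 assert (H0 : f 0 = 0) by (destruct E as [_ [_ [H0 _]]]; auto).
 set (s := sqrt (1 - 1 / piv)).
 assert (Hs : 0 <= s) by apply sqrt_pos.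
 assert (Hden : 0 < p * (1 + s)) by (apply Rmult_lt_0_compat; lra).
 set (tau := d / piv).
 assert (Htau0 : 0 <= tau) by (unfold tau; apply div_nonneg; lra).
 assert (Htaud : tau <= d). { unfold tau. apply (Rmult_le_reg_r piv); [lra|]. unfold Rdiv; rewrite Rmult_assoc, Rinv_l by lra. nra. }
 fold tau in Hgv, Hmin |- *.
 destruct (Req_dec d 0).
 { assert (tau = 0) by (unfold tau; rewrite H; unfold Rdiv; ring).
   assert (vb <= 0). { apply Hmin. lra. rewrite g_0; auto. }
   rewrite H1. unfold Rdiv. rewrite Rmult_0_r, Rmult_0_l. lra. }
 assert (Hdp : 0 < d) by lra.
 assert (Htau : 0 < tau) by (unfold tau; apply Rdiv_lt_0_compat; lra).
 set (G := gPE p f w).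
 assert (Hw0 : 0 < w). { destruct (Req_dec w 0); [|lra]. exfalso. unfold G in *; subst w. rewrite g_0 in Hdw; auto; lra. }
 set (a := f w / w).
 assert (Hfw : 0 <= f w) by (destruct E as [_ [_ [_ Hnn]]]; apply Hnn; lra).
 assert (Ha : 0 <= a) by (unfold a; apply div_nonneg; lra).
 assert (Haw : a * w * w = p * w - G). { unfold a, G, gPE. field. lra. }
 assert (H4aG : 4 * a * G <= p * p).
 { assert (4 * a * G * (w * w) <= p * p * (w * w)).
   { replace (4 * a * G * (w * w)) with (4 * G * (a * w * w)) by ring. rewrite Haw.
     assert (0 <= (p * w - 2 * G) * (p * w - 2 * G)) by apply Rle_0_sqr. nra. }
   assert (0 < w * w) by nra.
   apply (Rmult_le_reg_r (w * w)); auto. }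
 assert (HtauG : tau * piv <= G). { unfold tau. unfold Rdiv. rewrite Rmult_assoc, Rinv_l by lra. fold G in Hdw. lra. }
 assert (H4 : 4 * a * tau * piv <= p * p).
 { assert (4 * a * (tau * piv) <= 4 * a * G) by (apply Rmult_le_compat_l; lra). lra. }
 assert (Hdisc : p * p * (1 - 1 / piv) <= p * p - 4 * a * tau).
 { assert (4 * a * tau <= p * p / piv).
   { apply (Rmult_le_reg_r piv); [lra|]. replace (p * p / piv * piv) with (p * p) by (field; lra). lra. }
   unfold Rdiv in *. lra. }
 assert (H1p : 0 <= 1 - 1 / piv).
 { assert (1 / piv <= 1) by (apply div_le1; lra). lra. }
 set (Dq := sqrt (p * p - 4 * a * tau)).
 assert (HDq : p * s <= Dq).
 { unfold s, Dq. rewrite <- (sqrt_square p) at 1 by lra. rewrite <- sqrt_mult_alt by nra.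
   apply sqrt_le_1_alt. lra. }
 assert (HDq2 : Dq * Dq = p * p - 4 * a * tau) by (unfold Dq; apply sqrt_sqrt; nra).
 set (u := p + Dq).
 assert (Hu : 0 < u) by (unfold u; nra).
 set (r := 2 * tau / u).
 assert (Hr0 : 0 <= r) by (unfold r; apply div_nonneg; lra).
 assert (Hrb : r <= 2 * tau / (p * (1 + s))).
 { unfold r. unfold Rdiv. apply Rmult_le_compat_l; [lra|]. apply Rinv_le_contravar; [auto|]. unfold u. nra. }
 assert (Hq : p * r - a * r * r = tau).
 { assert (p * r - a * r * r - tau = tau * (2 * p * u - u * u - 4 * a * tau) / (u * u)).
   { unfold r. field. lra. }
   assert (2 * p * u - u * u - 4 * a * tau = 0). { unfold u. nra. }
   rewrite H2 in H1. unfold Rdiv in H1. rewrite Rmult_0_r, Rmult_0_l in H1. lra. }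
 assert (exists z, 0 <= z <= r /\ 0 <= z <= D /\ gPE p f z = tau).
 { destruct (Rle_dec r w).
   - assert (tau <= gPE p f r).
     { unfold gPE. assert (f r <= r / w * f w) by (apply (f_chord D); auto; lra).
       replace (r / w * f w) with (r * a) in H1 by (unfold a; field; lra). nra. }
     destruct (root_exists D p f tau r E HD Htau ltac:(lra) H1) as [z [Hz Hgz]].
     exists z; repeat split; lra.
   - assert (tau <= gPE p f w) by (apply Rle_trans with d; [exact Htaud | exact Hdw]).
     destruct (root_exists D p f tau w E HD Htau Hw H1) as [z [Hz Hgz]].
     exists z; repeat split; lra. }
 destruct H1 as [z [Hz1 [Hz2 Hz3]]].
 assert (vb <= z) by (apply Hmin; auto). lra. Qed.

Definition valf (p : nat -> R) (f : nat -> R -> R) v n := sum1 (fun s => gPE (p s) (f s) (v s)) n.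
Definition feas D (v : nat -> R) n := (forall s, (1 <= s <= n)%nat -> 0 <= v s) /\ sum1 v n <= D.

Lemma feas_le D v n s : feas D v n -> (1 <= s <= n)%nat -> 0 <= v s <= D.
Proof. intros [H1 H2] Hs. split. auto. eapply Rle_trans; [apply sum1_term_le; eauto|auto]. Qed.

Lemma feas_pred D v n : feas D v (S n) -> feas D v n.
Proof. intros [H1 H2]. split. intros; apply H1; lia. simpl in H2. assert (0 <= v (S n)) by (apply H1; lia). lra. Qed.

Lemma val_le_eta D p f n e v : is_eta_opt D p f n e -> feas D v n -> valf p f v n <= e.
Proof. intros [Hub _] [H1 H2]. apply Hub. exists v. unfold valf; auto. Qed.

Lemma eta_approx D p f n e eps : is_eta_opt D p f n e -> 0 < eps -> exists v, feas D v n /\ e - eps < valf p f v n.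
Proof. intros He Hp. destruct (lub_approx _ _ _ He Hp) as [r [[v [H1 [H2 H3]]] Hr]].
 exists v. split. split; auto. unfold valf; subst; auto. Qed.

Lemma eta0 D p f e : 0 <= D -> is_eta_opt D p f 0 e -> e = 0.
Proof. intros HD [Hub Hl]. assert (0 <= e). { apply Hub. exists (fun _ => 0). simpl. repeat split; intros; try lia; lra. }
 assert (e <= 0). { apply Hl. intros r [v [_ [_ Hr]]]. simpl in Hr. lra. } lra. Qed.

Lemma eta_mono D p f n e1 e2 : 0 <= D -> (forall s, (1 <= s <= S n)%nat -> f s 0 = 0) ->
  is_eta_opt D p f n e1 -> is_eta_opt D p f (S n) e2 -> e1 <= e2.
Proof. intros HD Hf0 H1 H2. destruct H1 as [_ Hl]. apply Hl. intros r [v [Hv1 [Hv2 Hr]]].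
 set (v' := fun s => if Nat.leb s n then v s else 0).
 assert (feas D v' (S n)).
 { split. intros s Hs. unfold v'. destruct (Nat.leb_spec s n). apply Hv1; lia. lra.
   simpl. unfold v' at 2. rewrite (proj2 (Nat.leb_gt (S n) n)) by lia.
   rewrite (sum1_ext v' v) by (intros s Hs; unfold v'; rewrite (proj2 (Nat.leb_le s n)) by lia; auto). lra. }
 assert (valf p f v' (S n) = r).
 { unfold valf; simpl. unfold v' at 2. rewrite (proj2 (Nat.leb_gt (S n) n)) by lia.
   rewrite g_0 by (apply Hf0; lia). rewrite Hr.
   rewrite (sum1_ext _ (fun s => gPE (p s) (f s) (v s))) by (intros s Hs; unfold v'; rewrite (proj2 (Nat.leb_le s n)) by lia; auto). lra. }
 rewrite <- H0. eapply val_le_eta; eauto. Qed.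

Lemma eta_step D p f n e1 e2 G : is_eta_opt D p f n e1 -> is_eta_opt D p f (S n) e2 ->
  (forall x, 0 <= x <= D -> gPE (p (S n)) (f (S n)) x <= G) -> e2 <= e1 + G.
Proof. intros H1 H2 HG. destruct H2 as [_ Hl]. apply Hl. intros r [v [Hv1 [Hv2 Hr]]].
 assert (F : feas D v (S n)) by (split; auto).
 subst r. simpl. assert (sum1 (fun s => gPE (p s) (f s) (v s)) n <= e1) by (apply (val_le_eta D p f n e1 v H1); apply feas_pred; auto).
 assert (gPE (p (S n)) (f (S n)) (v (S n)) <= G) by (apply HG; apply (feas_le D v (S n)); auto; lia). lra. Qed.

Lemma lam_exists X B a' D : 0 <= X -> 0 <= B <= D -> 0 <= a' -> X + a' <= D ->
  exists lam, 0 <= lam <= 1 /\ B + lam * (X - B) + a' <= D /\ X - lam * (X - B) <= D /\ - (lam * (X - B)) <= a'.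
Proof. intros. destruct (Rle_dec B X).
 - exists 1. lra.
 - destruct (Rle_dec (B + a' - D) 0).
   + exists 0. lra.
   + set (l := (B + a' - D) / (B - X)). exists l.
     assert (Hl : l * (B - X) = B + a' - D) by (unfold l; field; lra).
     assert (0 <= l) by (unfold l; apply div_nonneg; lra).
     assert (l <= 1) by (unfold l; apply div_le1; lra). nra. Qed.

Definition CS (p : nat -> R) (eta : nat -> R) y n :=
  sum1 (fun t => if Rle_dec (p t) y then eta t - eta (t - 1)%nat else 0) n.

Lemma exch_ineq D (p : nat -> R) (f : nat -> R -> R) n a b lam :
  (forall s, (1 <= s <= n)%nat -> elasticity_fun D (f s)) -> feas D a n -> feas D b n -> 0 <= lam <= 1 ->
  valf p f a n + valf p f b n <=
  valf p f (fun s => b s + lam * (a s - b s)) n + valf p f (fun s => a s - lam * (a s - b s)) n.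
Proof. intros Hf Ha Hb Hl. unfold valf. rewrite <- !sum1_plus. apply sum1_le. intros s Hs.
 apply (g_exchange D); auto; eapply feas_le; eauto. Qed.

Lemma claimC D m M T p f eta y : 0 < D -> 0 <= y ->
  (forall t, (1 <= t <= T)%nat -> m <= p t <= M /\ elasticity_fun D (f t)) ->
  (forall t, (t <= T)%nat -> is_eta_opt D p f t (eta t)) ->
  forall n, (n <= T)%nat -> forall a, feas D a n -> CS p eta y n + (valf p f a n - y * sum1 a n) <= eta n.
Proof. intros HD Hy HPF Heta. induction n; intros Hn a Ha.
 - unfold CS, valf; simpl. rewrite (eta0 D p f (eta 0%nat)); [lra|lra|apply Heta; lia].
 - assert (E : elasticity_fun D (f (S n))) by (apply HPF; lia).
   assert (Hpr : m <= p (S n) <= M) by (apply HPF; lia).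
   assert (Ha' : 0 <= a (S n) <= D) by (apply (feas_le D a (S n)); auto; lia).
   unfold CS; simpl sum1. fold (CS p eta y n). rewrite ?Nat.sub_0_r.
   destruct (Rle_dec (p (S n)) y).
   + assert (IH := IHn ltac:(lia) a (feas_pred D a n Ha)).
     unfold valf in *; simpl sum1.
     assert (gPE (p (S n)) (f (S n)) (a (S n)) <= p (S n) * a (S n)) by (apply (g_le_p D); auto).
     assert (p (S n) * a (S n) <= y * a (S n)) by (apply Rmult_le_compat_r; lra). lra.
   + rewrite Rplus_0_r.
     apply Rnot_gt_le. intro Hgt.
     set (X0 := CS p eta y n + (valf p f a (S n) - y * (sum1 a n + a (S n)))) in *.
     destruct (eta_approx D p f n (eta n) (X0 - eta (S n)) (Heta n ltac:(lia)) ltac:(lra)) as [b [Hb Hbv]].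
     destruct Ha as [Ha1 Ha2]. destruct Hb as [Hb1 Hb2].
     assert (HX : 0 <= sum1 a n) by (apply sum1_nonneg; intros; apply Ha1; lia).
     assert (HB : 0 <= sum1 b n) by (apply sum1_nonneg; auto).
     assert (HXa : sum1 a n + a (S n) <= D) by (simpl in Ha2; lra).
     destruct (lam_exists (sum1 a n) (sum1 b n) (a (S n)) D HX ltac:(lra) ltac:(lra) HXa) as [lam [Hl [Hc1 [Hc2 Hc3]]]].
     set (c := fun s => if Nat.eqb s (S n) then a s else b s + lam * (a s - b s)).
     set (e := fun s => a s - lam * (a s - b s)).
     assert (Hcn : forall s, (1 <= s <= n)%nat -> c s = b s + lam * (a s - b s)).
     { intros s Hs. unfold c. rewrite (proj2 (Nat.eqb_neq s (S n))) by lia. auto. }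
     assert (HcS : c (S n) = a (S n)) by (unfold c; rewrite Nat.eqb_refl; auto).
     assert (Hsumc : sum1 c n = sum1 b n + lam * (sum1 a n - sum1 b n)).
     { rewrite (sum1_ext c (fun s => b s + lam * (a s - b s))) by auto.
       rewrite sum1_plus, sum1_scal, sum1_minus. auto. }
     assert (Hsume : sum1 e n = sum1 a n - lam * (sum1 a n - sum1 b n)).
     { unfold e. rewrite sum1_minus, sum1_scal, sum1_minus. auto. }
     assert (Fc : feas D c (S n)).
     { split. intros s Hs. destruct (Nat.eq_dec s (S n)). subst; rewrite HcS; lra.
       rewrite Hcn by lia. assert (0 <= a s) by (apply Ha1; lia). assert (0 <= b s) by (apply Hb1; lia).
       replace (b s + lam * (a s - b s)) with (lam * a s + (1 - lam) * b s) by ring. nra.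
       simpl. rewrite HcS, Hsumc. lra. }
     assert (Fe : feas D e n).
     { split. intros s Hs. unfold e. assert (0 <= a s) by (apply Ha1; lia). assert (0 <= b s) by (apply Hb1; lia).
       replace (a s - lam * (a s - b s)) with ((1 - lam) * a s + lam * b s) by ring. nra.
       rewrite Hsume. lra. }
     assert (Vc : valf p f c (S n) <= eta (S n)) by (apply (val_le_eta D p f (S n)); auto).
     assert (IH := IHn ltac:(lia) e Fe).
     assert (Hex := exch_ineq D p f n a b lam ltac:(intros; apply HPF; lia) ltac:(split; [intros; apply Ha1; lia|simpl in Ha2; lra]) ltac:(split; auto) Hl).
     assert (Hvc : valf p f c (S n) = valf p f (fun s => b s + lam * (a s - b s)) n + gPE (p (S n)) (f (S n)) (a (S n))).
     { unfold valf. simpl. rewrite HcS. f_equal. apply sum1_ext. intros s Hs. rewrite Hcn; auto. }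
     assert (Hva : valf p f a (S n) = valf p f a n + gPE (p (S n)) (f (S n)) (a (S n))) by (unfold valf; simpl; auto).
     fold e in Hex.
     assert (y * (sum1 a n - lam * (sum1 a n - sum1 b n)) <= y * (sum1 a n + a (S n))) by (apply Rmult_le_compat_l; lra).
     unfold X0 in Hgt, Hbv. simpl sum1 in Hgt, Hbv. rewrite Hsume in IH. lra. Qed.

Lemma claimC_final D m M T p f eta y : 0 < D -> 0 <= y ->
  (forall t, (1 <= t <= T)%nat -> m <= p t <= M /\ elasticity_fun D (f t)) ->
  (forall t, (t <= T)%nat -> is_eta_opt D p f t (eta t)) ->
  CS p eta y T <= y * D.
Proof. intros HD Hy HPF Heta. apply Rnot_gt_le. intro Hgt.
 destruct (eta_approx D p f T (eta T) (CS p eta y T - y * D) (Heta T ltac:(lia)) ltac:(lra)) as [a [Ha Hav]].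
 pose proof (claimC D m M T p f eta y HD Hy HPF Heta T ltac:(lia) a Ha).
 assert (y * sum1 a T <= y * D) by (apply Rmult_le_compat_l; [lra|apply Ha]). lra. Qed.

Definition lsum (h : R * R -> R) (L : list (R * R)) := fold_right (fun x acc => h x + acc) 0 L.

Lemma lsum_app h l1 l2 : lsum h (l1 ++ l2) = lsum h l1 + lsum h l2.
Proof. induction l1; simpl; [lra|]. unfold lsum in *; simpl. rewrite IHl1. lra. Qed.

Lemma lsum_map_seq h (F : nat -> R * R) n : lsum h (map F (seq 1 n)) = sum1 (fun t => h (F t)) n.
Proof. induction n. simpl; auto. rewrite seq_S, map_app, lsum_app, IHn. simpl. unfold lsum; simpl. lra. Qed.

Definition phiL := lsum (fun x => fst x / snd x).
Definition totL := lsum fst.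
Definition sleL y := lsum (fun x => if Rle_dec (snd x) y then fst x else 0).

Lemma sle_all y L : (forall x, In x L -> snd x <= y) -> sleL y L = totL L.
Proof. induction L; intros H; simpl; auto. unfold sleL, totL, lsum in *; simpl.
 destruct (Rle_dec (snd a) y). rewrite IHL; auto. intros; apply H; simpl; auto.
 exfalso; apply n; apply H; simpl; auto. Qed.

Lemma exists_max (L : list (R * R)) : L <> nil -> exists x, In x L /\ forall z, In z L -> snd z <= snd x.
Proof. induction L; intros H. congruence. destruct L as [|b L].
 - exists a. split; simpl; auto. intros z [Hz|[]]; subst; lra.
 - destruct IHL as [x [Hx Hm]]. discriminate.
   destruct (Rle_dec (snd a) (snd x)).
   + exists x. split. simpl; auto. intros z [Hz|Hz]. subst; auto. auto.
   + exists a. split. simpl; auto. intros z [Hz|Hz]. subst; lra. specialize (Hm z Hz). lra. Qed.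

Lemma ln_ge_1m x : 0 < x -> 1 - 1 / x <= ln x.
Proof. intros Hx. pose proof (exp_ineq1_le (ln (1 / x))). rewrite exp_ln in H by (apply Rdiv_lt_0_compat; lra).
 unfold Rdiv in *. rewrite Rmult_1_l in *. rewrite ln_Rinv in H by lra. lra. Qed.

Lemma list_key m D : 0 < m -> 0 <= D -> forall n (L : list (R * R)), (length L <= n)%nat ->
  (forall x, In x L -> 0 <= fst x /\ m <= snd x) -> (forall y, m <= y -> sleL y L <= y * D) ->
  forall q, m <= q -> (forall x, In x L -> snd x <= q) -> phiL L <= totL L / q + D * ln (q / m).
Proof. intros Hm HD n. induction n; intros L Hlen HL Hs q Hq Hq2.
 - destruct L; [|simpl in Hlen; lia]. unfold phiL, totL, lsum; simpl.
   assert (0 <= ln (q / m)). { assert (1 <= q / m) by (apply (Rmult_le_reg_r m); [lra|]; unfold Rdiv; rewrite Rmult_assoc, Rinv_l; lra). pose proof (ln_ge_1m (q / m) ltac:(lra)). assert (1 / (q / m) <= 1) by (apply div_le1; lra). lra. }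
   unfold Rdiv; rewrite Rmult_0_l. nra.
 - destruct L as [|x1 L1].
   { unfold phiL, totL, lsum; simpl. assert (0 <= ln (q / m)). { assert (1 <= q / m) by (apply (Rmult_le_reg_r m); [lra|]; unfold Rdiv; rewrite Rmult_assoc, Rinv_l; lra). pose proof (ln_ge_1m (q / m) ltac:(lra)). assert (1 / (q / m) <= 1) by (apply div_le1; lra). lra. }
     unfold Rdiv; rewrite Rmult_0_l. nra. }
   set (L := x1 :: L1) in *.
   destruct (exists_max L ltac:(discriminate)) as [x0 [Hx0 Hmax]].
   destruct (in_split x0 L Hx0) as [l1 [l2 HLs]].
   assert (Hin' : forall z, In z (l1 ++ l2) -> In z L). { intros z Hz. rewrite HLs. apply in_app_or in Hz. apply in_or_app. destruct Hz; simpl; auto. }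
   destruct (HL x0 Hx0) as [Hd0 Hp0].
   assert (Hlen' : (length (l1 ++ l2) <= n)%nat). { rewrite HLs, !length_app in Hlen. simpl in Hlen. rewrite length_app. lia. }
   assert (Hs' : forall y, m <= y -> sleL y (l1 ++ l2) <= y * D).
   { intros y Hy. specialize (Hs y Hy). rewrite HLs in Hs. unfold sleL in *. rewrite lsum_app in *. unfold lsum in Hs at 2. simpl in Hs.
     destruct (Rle_dec (snd x0) y); fold (lsum (fun x => if Rle_dec (snd x) y then fst x else 0) l2) in Hs; lra. }
   assert (IH := IHn (l1 ++ l2) Hlen' ltac:(intros; apply HL; auto) Hs' (snd x0) Hp0 ltac:(intros; apply Hmax; auto)).
   assert (Hphi : phiL L = phiL (l1 ++ l2) + fst x0 / snd x0).
   { rewrite HLs. unfold phiL. rewrite !lsum_app. unfold lsum at 2 4; simpl. fold (lsum (fun x => fst x / snd x) l2). lra. }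
   assert (Htot : totL L = totL (l1 ++ l2) + fst x0).
   { rewrite HLs. unfold totL. rewrite !lsum_app. unfold lsum at 2 4; simpl. fold (lsum fst l2). lra. }
   assert (Htq : totL L <= snd x0 * D). { rewrite <- (sle_all (snd x0)); auto. }
   assert (Hq0 : snd x0 <= q) by auto.
   assert (H1 : phiL L <= totL L / snd x0 + D * ln (snd x0 / m)).
   { rewrite Hphi, Htot. unfold Rdiv in *. rewrite Rmult_plus_distr_r. lra. }
   assert (Hln : ln (q / m) = ln (q / snd x0) + ln (snd x0 / m)).
   { rewrite <- ln_mult by (apply Rdiv_lt_0_compat; lra). f_equal. field; repeat split; lra. }
   assert (Hl2 : 1 - 1 / (q / snd x0) <= ln (q / snd x0)) by (apply ln_ge_1m; apply Rdiv_lt_0_compat; lra).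
   replace (1 / (q / snd x0)) with (snd x0 / q) in Hl2 by (field; lra).
   assert (totL L / snd x0 - totL L / q <= D * (1 - snd x0 / q)).
   { replace (totL L / snd x0 - totL L / q) with (totL L * ((q - snd x0) / (q * snd x0))) by (field; lra).
     assert (0 <= (q - snd x0) / (q * snd x0)) by (apply div_nonneg; nra).
     apply Rle_trans with (snd x0 * D * ((q - snd x0) / (q * snd x0))). apply Rmult_le_compat_r; auto.
     right. field. lra. }
   rewrite Hln. assert (D * (1 - snd x0 / q) <= D * ln (q / snd x0)) by (apply Rmult_le_compat_l; lra). lra. Qed.

Theorem lemma15
  (Delta m M piv : R) (T : nat) (p : nat -> R) (f : nat -> R -> R)
  (eta : nat -> R) (vbar : nat -> R) :
  0 < Delta -> 0 < m -> m <= M -> 1 <= piv -> (1 <= T)%nat ->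
  (forall t, (1 <= t <= T)%nat -> m <= p t <= M /\ elasticity_fun Delta (f t)) ->
  (forall t, (t <= T)%nat -> is_eta_opt Delta p f t (eta t)) ->
  (forall t, (1 <= t <= T)%nat ->
     cr_pursuit_output Delta (p t) (f t) ((eta t - eta (t - 1)%nat) / piv) (vbar t)) ->
  sum1 vbar T <=
    2 * Delta / (piv * (1 + sqrt (1 - 1 / piv))) * (ln (M / m) + 1).
Proof.
 intros HD Hm HmM Hpi HT HPF Heta Hcr.
 set (s := sqrt (1 - 1 / piv)).
 assert (Hs : 0 <= s) by apply sqrt_pos.
 set (K := 2 / (piv * (1 + s))).
 assert (HK : 0 <= K) by (unfold K; apply div_nonneg; [lra|apply Rmult_lt_0_compat; lra]).
 set (d := fun t => eta t - eta (t - 1)%nat).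
 assert (Hd0 : forall t, (1 <= t <= T)%nat -> 0 <= d t).
 { intros t Ht. unfold d. destruct t. lia. replace (S t - 1)%nat with t by lia.
   assert (eta t <= eta (S t)). { apply (eta_mono Delta p f t); try lra. intros s0 Hs0. apply (HPF s0). lia.
     apply Heta; lia. apply Heta; lia. } lra. }
 assert (Hstep : forall t, (1 <= t <= T)%nat -> vbar t <= K * (d t / p t)).
 { intros t Ht. destruct (HPF t Ht) as [Hp E].
   destruct (continuity_ab_maj (fun v => gPE (p t) (f t) (clamp Delta v)) 0 Delta ltac:(lra)
     ltac:(intros; apply h_cont; auto; lra)) as [w [Hw1 Hw2]].
   rewrite clamp_id in Hw1 by lra.
   assert (Hmaxg : forall x, 0 <= x <= Delta -> gPE (p t) (f t) x <= gPE (p t) (f t) w).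
   { intros x Hx. specialize (Hw1 x Hx). rewrite clamp_id in Hw1 by lra. auto. }
   assert (Hdw : d t <= gPE (p t) (f t) w).
   { unfold d. destruct t. lia. replace (S t - 1)%nat with t by lia.
     assert (eta (S t) <= eta t + gPE (p (S t)) (f (S t)) w).
     { apply (eta_step Delta p f t); auto. apply Heta; lia. apply Heta; lia. } lra. }
   pose proof (step_bound Delta (p t) (f t) piv (d t) w (vbar t) E HD ltac:(lra) Hpi (Hd0 t Ht) Hw2 Hdw (Hcr t Ht)).
   fold s in H. replace (K * (d t / p t)) with (2 * (d t / piv) / (p t * (1 + s))). auto.
   unfold K. field. repeat split; lra. }
 set (L := map (fun t => (d t, p t)) (seq 1 T)).
 assert (HinL : forall x, In x L -> exists t, (1 <= t <= T)%nat /\ x = (d t, p t)).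
 { intros x Hx. unfold L in Hx. apply in_map_iff in Hx. destruct Hx as [t [Hx Ht]]. apply in_seq in Ht.
   exists t. split. lia. auto. }
 assert (Hphi : sum1 (fun t => d t / p t) T = phiL L).
 { unfold phiL, L. rewrite lsum_map_seq. auto. }
 assert (Htot : totL L = eta T).
 { unfold totL, L. rewrite lsum_map_seq. simpl. unfold d. rewrite sum1_tele.
   rewrite (eta0 Delta p f (eta 0%nat)); [lra|lra|apply Heta; lia]. }
 assert (Hsle : forall y, m <= y -> sleL y L <= y * Delta).
 { intros y Hy. unfold sleL, L. rewrite lsum_map_seq. simpl.
   apply (claimC_final Delta m M T p f eta y); auto; lra. }
 assert (Hkey := list_key m Delta Hm ltac:(lra) (length L) L (le_n _)
   ltac:(intros x Hx; destruct (HinL x Hx) as [t [Ht ->]]; simpl; split; [apply Hd0; auto|apply HPF; auto])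
   Hsle M HmM ltac:(intros x Hx; destruct (HinL x Hx) as [t [Ht ->]]; simpl; apply HPF; auto)).
 assert (HtM : totL L <= M * Delta).
 { rewrite <- (sle_all M). apply Hsle; lra. intros x Hx; destruct (HinL x Hx) as [t [Ht ->]]; simpl; apply HPF; auto. }
 assert (HtM' : totL L / M <= Delta).
 { apply (Rmult_le_reg_r M); [lra|]. replace (totL L / M * M) with (totL L) by (field; lra). lra. }
 assert (Hsum : sum1 vbar T <= K * sum1 (fun t => d t / p t) T).
 { rewrite <- sum1_scal. apply sum1_le. auto. }
 replace (2 * Delta / (piv * (1 + s)) * (ln (M / m) + 1)) with (K * (Delta + Delta * ln (M / m))).
 2:{ unfold K. field. split; lra. }
 rewrite Hphi in Hsum.
 assert (K * phiL L <= K * (Delta + Delta * ln (M / m))) by (apply Rmult_le_compat_l; lra). lra.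
Qed.
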